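(* Let $\Omega$ be a topological space and $X$ a Hausdorff locally convex topological vector space over $\mathbb{C}$. Let $A \subset C(\Omega, \mathbb{C})$, $f \in F(\Omega, X)$, $v \in F(\Omega, \mathbb{R}_+)$. Suppose that $\overline{(vf)(\Omega)}$ is compact and $vf$ is continuous on $\mathrm{supp}\, v$ (respectively, $\overline{f(\mathrm{supp}\, v)}$ is compact and $f$ is continuous on $\mathrm{supp}\, v$). If $A$ $\beta$-separates disjoint Lebesgue sets of $vf$ (respectively, of $f$) in $\mathrm{supp}\, v$, then for any $(A, v)$-antisymmetric $z$-filter $\mathcal{F}$ on $\Omega$, the set $\bigcap_{F \in \mathcal{F}} \overline{(vf)(F \cap \mathrm{supp}\, v)}$ (respectively, $\bigcap_{F \in \mathcal{F}} \overline{f(F \cap \mathrm{supp}\, v)}$) consists of a single point.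
   Context: Topological spaces are not assumed Hausdorff. $vf(x)=v(x)f(x)$; $\mathrm{supp}\,v$ is the closure of $\{v\neq0\}$. $X^*$ is the space of continuous linear functionals $X\to\mathbb{C}$, $\Re$ the real part. A zero-set is $h^{-1}(0)$ with $h\in C(\Omega,\mathbb{R})$; a $z$-filter is a nonempty family $\mathcal{F}$ of zero-sets with $\emptyset\notin\mathcal{F}$, closed under finite intersections and under passing to larger zero-sets. $\mathcal{F}$ is $(A,v)$-antisymmetric if every $F\in\mathcal{F}$ meets $\mathrm{supp}\,v$ and, for each $\phi\in A$ with $\bigcap_{F\in\mathcal{F}}\overline{\phi(F\cap\mathrm{supp}\,v)}\subset[0,1]$ (closures in $\mathbb{C}\cup\{\infty\}$), this intersection is a single point. For $h\in F(\Omega,X)$, $A$ ''$\beta$-separates disjoint Lebesgue sets of $h$ in $\mathrm{supp}\,v$'' means: for any $(A,v)$-antisymmetric $z$-filter $\mathcal{F}$, any $e^*\in X^*$ and $a<b$ real, there is $F\in\mathcal{F}$ with $F\cap L_a=\emptyset$ or $F\cap L^b=\emptyset$, where $L_a=\{x\in\mathrm{supp}\,v:\Re e^*(h(x))\le a\}$, $L^b=\{x\in\mathrm{supp}\,v:\Re e^*(h(x))\ge b\}$. *)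

(* Defs.v *)
From HB Require Import structures.
From mathcomp Require Import all_boot all_order all_algebra.
From mathcomp Require Import all_classical all_reals all_analysis.
From mathcomp.real_closed Require Import complex.
Import numFieldTopology.Exports numFieldNormedType.Exports.

Set Implicit Arguments.
Unset Strict Implicit.
Unset Printing Implicit Defensive.
Import Order.TTheory GRing.Theory Num.Theory.

Local Open Scope classical_set_scope.
Local Open Scope ring_scope.

(* The usual (norm) topology on the complex numbers R[i]. *)
HB.instance Definition _ (R : realType) := PseudoPointedMetric.copy R[i] (R[i])^o.

Section defs.
Context {R : realType} {Omega : topologicalType}.

Definition suppv (v : Omega -> R) : set Omega := closure [set x | v x != 0].

Definition zero_set (Z : set Omega) : Prop :=
  exists h : Omega -> R, continuous h /\ Z = h @^-1` [set 0].

Definition z_filter (FF : set (set Omega)) : Prop :=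
  [/\ FF !=set0,
      (forall F, FF F -> zero_set F),
      ~ FF set0,
      (forall F G, FF F -> FF G -> FF (F `&` G)) &
      (forall F G, FF F -> zero_set G -> F `<=` G -> FF G)].

(* The Riemann sphere C u {oo} as the one-point compactification of C;
   a point z of C is [Some z], oo is [None]. *)
Definition riemann_sphere := one_point_compactification R[i].

Definition unit_seg_sphere : set riemann_sphere :=
  [set z | exists r : R, 0 <= r <= 1 /\ z = Some (r%:C)%C].

Definition antisymmetric_zfilter (A : set (Omega -> R[i])) (v : Omega -> R)
    (FF : set (set Omega)) : Prop :=
  [/\ z_filter FF,
      (forall F, FF F -> F `&` suppv v !=set0) &
      (forall phi, A phi ->
        \bigcap_(F in FF)
            closure (Some @` (phi @` (F `&` suppv v)) : set riemann_sphere)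
          `<=` unit_seg_sphere ->
        exists p : riemann_sphere,
          \bigcap_(F in FF)
            closure (Some @` (phi @` (F `&` suppv v)) : set riemann_sphere)
          = [set p])].

Definition is_dual {X : tvsType R[i]} (e : X -> R[i]) : Prop :=
  continuous e /\ (forall (a : R[i]) (x y : X), e (a *: x + y) = a * e x + e y).

Definition beta_separates {X : tvsType R[i]} (A : set (Omega -> R[i]))
    (v : Omega -> R) (h : Omega -> X) : Prop :=
  forall FF, antisymmetric_zfilter A v FF ->
  forall e : X -> R[i], is_dual e ->
  forall a b : R, a < b ->
  exists2 F, FF F &
    (F `&` [set x | suppv v x /\ complex.Re (e (h x)) <= a] = set0 \/
     F `&` [set x | suppv v x /\ b <= complex.Re (e (h x))] = set0).

End defs.

Definition vmul {R : realType} {Omega : Type} {X : lmodType R[i]}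
  (v : Omega -> R) (f : Omega -> X) : Omega -> X :=
  fun x => ((v x)%:C)%C *: f x.

(* Main.v *)
Require Import Defs.
From HB Require Import structures.
From mathcomp Require Import all_boot all_order all_algebra.
From mathcomp Require Import all_classical all_reals all_analysis.
From mathcomp.real_closed Require Import complex.
From mathcomp Require Import ring lra.
Import numFieldTopology.Exports numFieldNormedType.Exports.
Import Order.TTheory GRing.Theory Num.Theory.
Local Open Scope classical_set_scope.
Local Open Scope ring_scope.
Section HB.
Variable R : realType.
Variable V : lmodType R[i].

Definition sublin (p : V -> R) :=
  (forall x y, p (x + y) <= p x + p y) /\
  (forall (t : R) x, 0 < t -> p (t%:C%C *: x) = t * p x).

Lemma sublin0 p : sublin p -> p 0 = 0.
Proof.
move=> [_ hm]; have := hm 2 0 (ltr0Sn _ 1); rewrite scaler0 => h; lra.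
Qed.

Lemma sublin_homog p (t : R) x : sublin p -> 0 <= t -> p (t%:C%C *: x) = t * p x.
Proof.
move=> sp; rewrite le_eqVlt => /orP[/eqP <-|t0]; last by apply: sp.2.
by rewrite mul0r rmorph0 scale0r sublin0.
Qed.

Lemma sublin_lb p x : sublin p -> - p (- x) <= p x.
Proof.
move=> sp; have := sp.1 x (- x); rewrite subrr sublin0 //; lra.
Qed.

Lemma inf_le_scale (S1 S2 : set R) (l : R) : 0 < l -> S1 !=set0 -> has_lbound S2 ->
  (forall s, S1 s -> S2 (l * s)) -> inf S2 <= l * inf S1.
Proof.
move=> l0 ne lb hs; rewrite -ler_pdivrMl //; apply: lb_le_inf => // s S1s.
by rewrite ler_pdivrMl //; apply: ge_inf => //; apply: hs.
Qed.

Lemma sublin_inf (S : V -> set R) :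
  (forall y, S y !=set0) -> (forall y, has_lbound (S y)) ->
  (forall mu y s, 0 < mu -> S y s -> S (mu%:C%C *: y) (mu * s)) ->
  (forall y w s t, S y s -> S w t -> exists2 u, S (y + w) u & u <= s + t) ->
  sublin (fun y => inf (S y)).
Proof.
move=> ne lb hs ha; split.
- move=> y w.
  have : forall s, S y s -> inf (S (y + w)) - s <= inf (S w).
    move=> s Sys; apply: lb_le_inf => // t Swt.
    have [u Su us] := ha _ _ _ _ Sys Swt.
    have := ge_inf (lb (y + w)) Su; lra.
  move=> h; suff : inf (S (y + w)) - inf (S w) <= inf (S y) by lra.
  apply: lb_le_inf => // s Sys; have := h s Sys; lra.
- move=> t y t0; apply/eqP; rewrite eq_le; apply/andP; split.
    by apply: inf_le_scale => // s Ss; apply: hs.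
  rewrite -ler_pdivlMl //.
  have -> : inf (S y) = inf (S (t^-1%:C%C *: (t%:C%C *: y))).
    by rewrite scalerA -rmorphM mulVf ?gt_eqF // rmorph1 scale1r.
  apply: inf_le_scale => //; first by rewrite invr_gt0.
  move=> s Ss; apply: hs => //; by rewrite invr_gt0.
Qed.


Definition Tf (m : V -> R) (x : V) (c : R) (y : V) :=
  inf [set m (y + t%:C%C *: x) - t * c | t in [set t : R | 0 <= t]].

Lemma Tf_lb m x c y : sublin m -> c <= m x ->
  has_lbound [set m (y + t%:C%C *: x) - t * c | t in [set t : R | 0 <= t]].
Proof.
move=> sm cm; exists (- m (- y)) => _ [t t0 <-].
have h1 := sm.1 (y + t%:C%C *: x) (- y).
rewrite addrC addKr sublin_homog // in h1.
have : t * c <= t * m x by rewrite ler_wpM2l.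
lra.
Qed.

Lemma Tf_sublin m x c : sublin m -> c <= m x -> sublin (Tf m x c).
Proof.
move=> sm cm; apply: sublin_inf.
- move=> y; exists (m (y + 0%:C%C *: x) - 0 * c) => /=; by exists 0.
- by move=> y; apply: Tf_lb.
- move=> mu y _ mu0 /= [t t0 <-]; exists (mu * t); first by rewrite mulr_ge0 // ltW.
  by rewrite mulrBr -(@sublin_homog m mu (y + t%:C%C *: x) sm (ltW mu0)) scalerDr scalerA -rmorphM mulrA.
- move=> y w _ _ /= [s s0 <-] [t t0 <-].
  exists (m ((y + w) + (s + t)%:C%C *: x) - (s + t) * c).
    by exists (s + t) => //; rewrite addr_ge0.
  have -> : (y + w) + (s + t)%:C%C *: x = (y + s%:C%C *: x) + (w + t%:C%C *: x).
    by rewrite rmorphD scalerDl addrACA.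
  have := sm.1 (y + s%:C%C *: x) (w + t%:C%C *: x); lra.
Qed.

Lemma Tf_le m x c y : sublin m -> c <= m x -> Tf m x c y <= m y.
Proof.
move=> sm cm; have h := ge_inf (Tf_lb m x c y sm cm).
have := h (m (y + 0%:C%C *: x) - 0 * c); rewrite /Tf rmorph0 scale0r addr0 mul0r subr0.
apply; exists 0 => //=; by rewrite rmorph0 scale0r addr0 mul0r subr0.
Qed.

Lemma Tf_neg m x c : sublin m -> c <= m x -> Tf m x c (- x) <= - c.
Proof.
move=> sm cm; have h := ge_inf (Tf_lb m x c (- x) sm cm).
have := h (m (- x + 1%:C%C *: x) - 1 * c); rewrite /Tf rmorph1 scale1r addNr sublin0 // mul1r sub0r.
apply; exists 1 => //=; by rewrite rmorph1 scale1r addNr sublin0 // mul1r sub0r.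
Qed.


Section Zorn.
Variable p0 : V -> R.
Hypothesis sp0 : sublin p0.

Definition SL := {q : V -> R | sublin q /\ (forall x, q x <= p0 x)}.
Definition Rl (a b : SL) : bool := `[< forall x, sval b x <= sval a x >].

Lemma minimal_exists : exists t : SL, premaximal (fun a b => Rl a b) t.
Proof.
pose t0 : SL := exist _ p0 (conj sp0 (fun x => lexx _)).
apply: (@ZL_preorder SL t0).
- by move=> t; apply/asboolP => x.
- move=> a b c /asboolP hab /asboolP hbc; apply/asboolP => x.
  exact: le_trans (hbc x) (hab x).
move=> A tot; have [[q0 Aq0]|A0] := pselect (A !=set0); last first.
  by exists t0 => s As; exfalso; apply: A0; exists s.
pose S := fun y => [set sval q y | q in A].
have sm : sublin (fun y => inf (S y)).
  apply: sublin_inf.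
  - by move=> y; exists (sval q0 y); exists q0.
  - move=> y; exists (- p0 (- y)) => _ [q Aq <-].
    have [sq lq] := svalP q.
    have := sublin_lb _ y sq; have := lq (- y); lra.
  - move=> mu y _ mu0 [q Aq <-]; exists q => //.
    have [sq _] := svalP q; by rewrite sq.2.
  - move=> y w _ _ [q1 A1 <-] [q2 A2 <-].
    have [sq1 _] := svalP q1; have [sq2 _] := svalP q2.
    case: (tot q1 q2 A1 A2) => /asboolP h.
    + exists (sval q2 (y + w)); first by exists q2.
      have := sq2.1 y w; have := h y; lra.
    + exists (sval q1 (y + w)); first by exists q1.
      have := sq1.1 y w; have := h w; lra.
have lb : forall y, has_lbound (S y).
  move=> y; exists (- p0 (- y)) => _ [q Aq <-].
  have [sq lq] := svalP q.
  have := sublin_lb _ y sq; have := lq (- y); lra.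
have ml : forall x, inf (S x) <= p0 x.
  move=> x; have [_ l0] := svalP q0.
  have h : inf (S x) <= sval q0 x by apply: (ge_inf (lb x)); exists q0.
  exact: le_trans h (l0 x).
exists (exist _ (fun y => inf (S y)) (conj sm ml)) => s As.
apply/asboolP => x /=; apply: (ge_inf (lb x)); by exists s.
Qed.

Lemma minimal_odd (m : SL) : premaximal (fun a b => Rl a b) m ->
  forall x, sval m (- x) = - sval m x.
Proof.
move=> pm x; have [sm lm] := svalP m.
have cx : sval m x <= sval m x by [].
pose T := Tf (sval m) x (sval m x).
have sT : sublin T by apply: Tf_sublin.
have lT : forall y, T y <= p0 y.
  by move=> y; apply: le_trans (Tf_le _ _ _ _ sm cx) (lm y).
pose t : SL := exist _ T (conj sT lT).
have : Rl m t by apply/asboolP => y; exact: Tf_le.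
move=> /pm /asboolP /= h.
have := h (- x); have := Tf_neg _ _ _ sm cx; have := sublin_lb _ x sm.
rewrite /T; lra.
Qed.

Lemma minimal_linear (m : SL) : premaximal (fun a b => Rl a b) m ->
  (forall x y, sval m (x + y) = sval m x + sval m y) /\ (forall (t : R) x, sval m (t%:C%C *: x) = t * sval m x).
Proof.
move=> pm; have [sm lm] := svalP m; have od := minimal_odd m pm; split.
  move=> x y; apply/eqP; rewrite eq_le sm.1 /=.
  have := sm.1 (- x) (- y); rewrite -opprD !od; lra.
move=> t x; have [t0|t0] := leP 0 t; first exact: sublin_homog.
have -> : t%:C%C *: x = - ((- t)%:C%C *: x) by rewrite rmorphN scaleNr opprK.
rewrite od sublin_homog //; first lra.
by rewrite oppr_ge0 ltW.
Qed.

End Zorn.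

Lemma hahn_banach (p : V -> R) (x0 : V) : sublin p ->
  exists f : V -> R, [/\ (forall x y, f (x + y) = f x + f y),
    (forall (t : R) x, f (t%:C%C *: x) = t * f x),
    (forall x, f x <= p x) & p x0 <= f x0].
Proof.
move=> sp; have cx : p x0 <= p x0 by [].
pose p0 := Tf p x0 (p x0).
have sp0 : sublin p0 by apply: Tf_sublin.
have [m pm] := minimal_exists p0 sp0.
have [ad hm] := minimal_linear p0 m pm.
have [sm lm] := svalP m.
exists (sval m); split => //.
  by move=> x; apply: le_trans (lm x) (Tf_le _ _ _ _ sp cx).
have := lm (- x0); have := Tf_neg _ _ _ sp cx; rewrite (minimal_odd p0 m pm).
rewrite /p0; lra.
Qed.

End HB.
Arguments sublin {R V}.
Arguments sublin_inf {R V}.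
Arguments hahn_banach {R V}.

Section TV.
Variable R : realType.
Variable X : tvsType R[i].

Lemma convex_nbhs (hX : hausdorff_space X) (z : X) : z != 0 ->
  exists U : set X, [/\ open U, convex_set (U : set (convex_lmodType X)), U 0 & ~ U z].
Proof.
move=> z0; have z0' : (0 : X) != z by rewrite eq_sym.
have [A [oA A0 Az]] := hausdorff_accessible hX z0'.
have [B cB [Bo Bb]] := @locally_convex R[i] X.
have := Bb 0 A; rewrite /= => /(_ _) [].
  by apply: open_nbhs_nbhs; split => //; exact: set_mem.
move=> U [BU U0] UA; exists U; split => //.
- exact: Bo.
- by apply: cB; exact: mem_set.
- move=> Uz; move: Az; rewrite inE => /(_ (UA _ Uz)). done.
Qed.

Lemma pos_real (e : R[i]) : 0 < e -> e = (complex.Re e)%:C%C.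
Proof. rewrite ltcE => /andP[/eqP h _]; by case: e h => a b /= ->. Qed.

Lemma pos_Re (e : R[i]) : 0 < e -> 0 < complex.Re e.
Proof. by rewrite ltcE => /andP[_]. Qed.

Lemma normC_real (r : R) : `|r%:C%C| = `|r|%:C%C.
Proof. by rewrite normc_def /= expr0n addr0 sqrtr_sqr. Qed.

Lemma conv_comb (U : set X) (cU : convex_set (U : set (convex_lmodType X)))
  (a b : X) (l : R) : 0 <= l -> l <= 1 -> U a -> U b ->
  U (l%:C%C *: a + (1 - l)%:C%C *: b).
Proof.
move=> l0 l1 Ua Ub.
have l0' : (0 : R[i]) <= l%:C%C by rewrite lecR.
have l1' : l%:C%C <= (1 : R[i]) by rewrite -(rmorph1 (real_complex R)) lecR.
have := cU a b (Itv01 l0' l1') (mem_set Ua) (mem_set Ub).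
rewrite inE /=. rewrite rmorphB rmorph1. done.
Qed.

Lemma absorb (U : set X) : nbhs 0 U -> forall y : X, exists2 r : R, 0 < r & U (r%:C%C *: y).
Proof.
move=> U0 y; have /= := scale_continuous (0, y) U.
rewrite scale0r => /(_ U0)[] /= B [B1 B2] BU.
have [e e0 be] := (nbhs_ballP _ _).1 B1.
have he : e = (complex.Re e)%:C%C.
  exact: pos_real.
have r0 : 0 < complex.Re e by apply: pos_Re.
exists (complex.Re e / 2); first by rewrite divr_gt0.
apply: (BU ((complex.Re e / 2)%:C%C, y)); split => //=; last exact: nbhs_singleton.
apply: be; rewrite /ball /= sub0r normrN.
rewrite {2}he normC_real ltcR ger0_norm; first lra.
by rewrite divr_ge0 // ltW.
Qed.

Section Gauge.
Variables (U : set X) (oU : open U) (U0 : U 0).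
Hypothesis cU : convex_set (U : set (convex_lmodType X)).

Definition gS (y : X) := [set t : R | 0 < t /\ U (t^-1%:C%C *: y)].
Definition gauge (y : X) := inf (gS y).

Lemma nbhsU : nbhs 0 U.
Proof. by apply: open_nbhs_nbhs; split. Qed.

Lemma gS_ne y : gS y !=set0.
Proof.
have [r r0 Ur] := absorb U nbhsU y; exists r^-1; split; first by rewrite invr_gt0.
by rewrite invrK.
Qed.

Lemma gS_lb y : has_lbound (gS y).
Proof. by exists 0 => t [t0 _]; apply: ltW. Qed.

Lemma gauge_sublin : sublin gauge.
Proof.
apply: sublin_inf.
- exact: gS_ne.
- exact: gS_lb.
- move=> mu y t mu0 [t0 Ut]; split; first by rewrite mulr_gt0.
  rewrite scalerA -rmorphM invfM mulrAC mulVf ?gt_eqF // mul1r //.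
- move=> y w s t [s0 Us] [t0 Ut]; exists (s + t) => //; split.
    by rewrite addr_gt0.
  have st0 : 0 < s + t by rewrite addr_gt0.
  have l0 : 0 <= s / (s + t) by rewrite divr_ge0 // ltW.
  have l1 : s / (s + t) <= 1 by rewrite ler_pdivrMr // mul1r lerDl ltW.
  have := conv_comb _ cU _ _ _ l0 l1 Us Ut.
  rewrite !scalerA -!rmorphM.
  have -> : s / (s + t) * s^-1 = (s + t)^-1.
    by field; rewrite ?gt_eqF //; apply/andP; split; rewrite gt_eqF.
  have -> : (1 - s / (s + t)) * t^-1 = (s + t)^-1.
    by field; rewrite ?gt_eqF //; apply/andP; split; rewrite gt_eqF.
  by rewrite -scalerDr.
Qed.

Lemma gauge_le1 y : U y -> gauge y <= 1.
Proof.
move=> Uy; apply: (ge_inf (gS_lb y)); split => //.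
by rewrite invr1 rmorph1 scale1r.
Qed.

Lemma gauge_ge1 z : ~ U z -> 1 <= gauge z.
Proof.
move=> Uz; apply: lb_le_inf; first exact: gS_ne.
move=> t [t0 Ut]; rewrite leNgt; apply/negP => t1; apply: Uz.
have := conv_comb _ cU _ _ _ (ltW t0) (ltW t1) Ut U0.
by rewrite scaler0 addr0 scalerA -rmorphM mulfV ?gt_eqF // rmorph1 scale1r.
Qed.

End Gauge.

Lemma ii : 'i%C * 'i%C = -1 :> R[i].
Proof. apply/eqP; rewrite eq_complex /=; apply/andP; split; apply/eqP; ring. Qed.
Lemma cplx_id (al be u w : R) :
  ((al * u + be * w)%:C%C - 'i%C * (al * w - be * u)%:C%C) =
  (al%:C%C + 'i%C * be%:C%C) * (u%:C%C - 'i%C * w%:C%C) :> R[i].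
Proof. apply/eqP; rewrite eq_complex /=; apply/andP; split; apply/eqP; ring. Qed.
Lemma Re_e (a b : R) : complex.Re (a%:C%C - 'i%C * b%:C%C) = a.
Proof. rewrite /=; ring. Qed.
Lemma norm_i : `|'i%C| = 1 :> R[i].
Proof. by rewrite normc_def /= expr0n expr1n add0r sqrtr1. Qed.
Lemma norm_e (a b : R) : `|a%:C%C - 'i%C * b%:C%C| <= (`|a| + `|b|)%:C%C.
Proof.
apply: le_trans (ler_normB _ _) _.
by rewrite normrM norm_i mul1r !normC_real rmorphD.
Qed.

Lemma separation (hX : hausdorff_space X) (z : X) : z != 0 ->
  exists e : X -> R[i], is_dual e /\ 1 <= complex.Re (e z).
Proof.
move=> z0; have [U [oU cU U0 Uz]] := convex_nbhs hX z z0.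
have sg := gauge_sublin U oU U0 cU.
have [f [fD fZ fle fz]] := hahn_banach _ z sg.
have g1 := gauge_ge1 U oU U0 cU z Uz.
have f1 : 1 <= f z by apply: le_trans g1 fz.
have f0 : f 0 = 0 by have := fD 0 0; rewrite addr0; lra.
have fN : forall x, f (- x) = - f x by move=> x; have := fD x (- x); rewrite subrr f0; lra.
pose e := fun y => (f y)%:C%C - 'i%C * (f ('i%C *: y))%:C%C.
have eD : forall x y, e (x + y) = e x + e y.
  by move=> x y; rewrite /e scalerDr !fD !rmorphD; ring.
have eZ : forall (a : R[i]) x, e (a *: x) = a * e x.
  move=> a x; set al := complex.Re a; set be := complex.Im a.
  have ha : a = al%:C%C + 'i%C * be%:C%C := complexE a.
  rewrite ha.
  have h1 : (al%:C%C + 'i%C * be%:C%C) *: x = al%:C%C *: x + be%:C%C *: ('i%C *: x).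
    by rewrite scalerDl scalerA mulrC.
  have h3 : 'i%C * (al%:C%C + 'i%C * be%:C%C) = al%:C%C * 'i%C + (- be)%:C%C.
    by rewrite rmorphN mulrDr mulrA ii; ring.
  have h2 : 'i%C *: ((al%:C%C + 'i%C * be%:C%C) *: x) = al%:C%C *: ('i%C *: x) + (- be)%:C%C *: x.
    by rewrite scalerA h3 scalerDl -scalerA.
  rewrite /e h2 h1 !fD !fZ -cplx_id mulNr; congr (_ - _ * _); congr (_%:C%C).
have W0 : nbhs 0 (U `&` [set w | U (- w)]).
  apply: filterI; first exact: nbhsU U oU U0.
  apply: filterS (nbhs0N (nbhsU U oU U0)) => w [u Uu <-] /=; by rewrite opprK.
have fb : forall w, (U `&` [set w | U (- w)]) w -> `|f w| <= 1.
  move=> w [Uw Unw]; have := fle w; have := fle (- w).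
  have := gauge_le1 U w Uw; have := gauge_le1 U (- w) Unw; rewrite fN ler_norml => *; lra.
have fsmall : forall k : R, 0 < k ->
    nbhs 0 [set w | `|f w| <= k /\ `|f ('i%C *: w)| <= k].
  move=> k k0; have kC : k%:C%C != 0 :> R[i] by rewrite eq_complex /= negb_and gt_eqF.
  have N0 := nbhs0Z kC W0.
  have P0 : forall w, ( *:%R (k%:C%C) @` (U `&` [set w | U (- w)])) w -> `|f w| <= k.
    move=> _ [u Wu <-]; rewrite fZ normrM gtr0_norm //.
    by apply: le_trans (ler_wpM2l (ltW k0) (fb u Wu)) _; rewrite mulr1.
  have iC : - 'i%C != 0 :> R[i] by rewrite oppr_eq0 eq_complex /= negb_and oner_eq0 orbT.
  have N1 := nbhs0Z iC N0.
  apply: filterS (filterI N0 N1) => w [Nw]; case => n Nn hn; subst w; split; first exact: P0.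
  by rewrite scalerA mulrN ii opprK scale1r; exact: P0.
exists e; split; last by rewrite /e Re_e.
split; last by move=> a x y; rewrite eD eZ.
move=> x P /nbhs_ballP [eps eps0 beps].
set r := complex.Re eps; have r0 := pos_Re _ eps0; have he := pos_real _ eps0.
have r4 : 0 < r / 4 by rewrite divr_gt0.
have := nbhsT x (fsmall _ r4).
apply: filterS => _ [n [hn1 hn2] <-].
apply: beps; rewrite /ball /= eD opprD addrA subrr add0r normrN.
apply: le_lt_trans (norm_e _ _) _; rewrite he ltcR; lra.
Qed.

End TV.

Section Core.
Variable R : realType.

Lemma ReD (x y : R[i]) : complex.Re (x + y) = complex.Re x + complex.Re y.
Proof. by case: x; case: y. Qed.

Lemma ReB (x y : R[i]) : complex.Re (x - y) = complex.Re x - complex.Re y.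
Proof. by case: x; case: y. Qed.


Lemma Re_lt (x : R[i]) (r : R) : `|x| < r%:C%C -> complex.Re x < r.
Proof.
move=> h; have := normc_ge_Re x => h2.
have : `|complex.Re x|%:C%C < r%:C%C by exact: (le_lt_trans h2 h).
by rewrite ltcR => /(le_lt_trans (ler_norm _)).
Qed.
End Core.

Lemma cont_ball (R : realType) (X : tvsType R[i]) (e : X -> R[i]) (ce : continuous e)
  (p : X) (r : R[i]) (r0 : 0 < r) : nbhs p [set y | ball (e p) r (e y)].
Proof.
have Bp := ce p _ (nbhsx_ballx (e p) _ r0).
by move: Bp; rewrite nbhs_filterE /fmap /preimage /=.
Qed.

Lemma core (R : realType) (Omega : topologicalType) (X : tvsType R[i])
  (sepX : forall z : X, z != 0 -> exists e : X -> R[i], is_dual e /\ 1 <= complex.Re (e z))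
  (A : set (Omega -> R[i])) (v : Omega -> R) (h : Omega -> X) (C : set X)
  (FF : set (set Omega)) :
  compact C -> (forall F, FF F -> h @` (F `&` suppv v) `<=` C) ->
  beta_separates A v h -> antisymmetric_zfilter A v FF ->
  exists p : X, \bigcap_(F in FF) closure (h @` (F `&` suppv v)) = [set p].
Proof.
move=> cC hC bs aFF.
have aFF' := aFF; case: aFF' => [[[F0 FF0] _ _ FFI _] FFS _].
pose G := filter_from FF (fun F => h @` (F `&` suppv v)).
have fG : Filter G.
  apply: filter_from_filter; first by exists F0.
  move=> F1 F2 h1 h2; exists (F1 `&` F2); first exact: FFI.
  move=> _ [x [[x1 x2] xs] <-]; split; exists x => //.
have pG : ProperFilter G.
  apply: filter_from_proper => // F hF.
  have [x xF] := FFS F hF; by exists (h x); exists x.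
have GC : G C by exists F0 => //; exact: hC.
have [p [Cp clp]] := cC G pG GC.
have inK : forall q, (forall F, FF F -> closure (h @` (F `&` suppv v)) q) ->
    q = p.
  move=> q hq; apply/eqP; apply/negPn/negP => qp.
  have : q - p != 0 by rewrite subr_eq0.
  move=> /sepX [e [[ce le] he]].
  have eqp : e q = e (q - p) + e p.
    by rewrite -{1}(subrK p q) -[q - p]scale1r le mul1r scale1r.
  pose a := complex.Re (e p) + 1/3; pose b := complex.Re (e p) + 2/3.
  have ab : a < b by rewrite ltrD2l ltr_pM2r // ltr1n.
  have [F hF [H|H]] := bs FF aFF e (conj ce le) a b ab.
  -
    have h3 : (0 : R[i]) < (1/3)%:C%C by rewrite ltcR divr_gt0.
    have Bp := cont_ball _ _ _ ce p _ h3.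
    have clpF : closure (h @` (F `&` suppv v)) p.
      move=> B nB; apply: clp => //; by exists F.
    have [_ [[x [xF xS] <-] bx]] := clpF _ Bp.
    have : (F `&` [set x | suppv v x /\ complex.Re (e (h x)) <= a]) x.
      split => //; split => //.
      have bx' : `|e (h x) - e p| < (1/3)%:C%C by rewrite distrC; exact: bx.
      have := Re_lt _ _ _ bx'; rewrite ReB /a => hx; lra.
    by rewrite H.
  - have h3 : (0 : R[i]) < (1/3)%:C%C by rewrite ltcR divr_gt0.
    have Bq := cont_ball _ _ _ ce q _ h3.
    have [_ [[x [xF xS] <-] bx]] := hq F hF _ Bq.
    have : (F `&` [set x | suppv v x /\ b <= complex.Re (e (h x))]) x.
      split => //; split => //.
      have := Re_lt _ _ _ bx; rewrite ReB eqp ReD /b => hx; lra.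
    by rewrite H.
exists p; apply/seteqP; split.
  move=> q hq; exact: inK.
move=> q -> F hF B nB; apply: clp => //; by exists F.
Qed.

Theorem lemma3p5 (R : realType) (Omega : topologicalType) (X : tvsType R[i])
  (hX : hausdorff_space X)
  (A : set (Omega -> R[i])) (hA : forall phi, A phi -> continuous phi)
  (f : Omega -> X) (v : Omega -> R) (hv : forall x, 0 <= v x) :
  (* case of v f *)
  (compact (closure (range (vmul v f))) ->
   {within suppv v, continuous (vmul v f)} ->
   beta_separates A v (vmul v f) ->
   forall FF : set (set Omega), antisymmetric_zfilter A v FF ->
   exists p : X,
     \bigcap_(F in FF) closure (vmul v f @` (F `&` suppv v)) = [set p])
  /\
  (* "respectively" case of f *)
  (compact (closure (f @` suppv v)) ->
   {within suppv v, continuous f} ->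
   beta_separates A v f ->
   forall FF : set (set Omega), antisymmetric_zfilter A v FF ->
   exists p : X,
     \bigcap_(F in FF) closure (f @` (F `&` suppv v)) = [set p]).
Proof.
have sepX := @separation R X hX.
split.
- move=> cC _ bs FF aFF.
  apply: (@core R Omega X sepX A v (vmul v f) _ FF cC _ bs aFF).
  move=> F _ _ [x _ <-]; apply: subset_closure; by exists x.
- move=> cC _ bs FF aFF.
  apply: (@core R Omega X sepX A v f _ FF cC _ bs aFF).
  move=> F _ _ [x [_ xs] <-]; apply: subset_closure; by exists x.
Qed.
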